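(* Let $X\sim P_X$ be a discrete random variable on $\mathcal{X}$, let $M$ be a positive integer and $\gamma\ge1$. Then there exists an $M$-type distribution $P_{\hat X}$ (on $\mathcal{X}$, possibly augmented by one extra symbol $\mathtt{e}\notin\mathcal{X}$ to which $P_X$ assigns probability zero) such that $$E_\gamma(P_{\hat X}\|P_X)\le\Big[1-\frac\gamma2\,\mathbb{P}\big[\imath_X(X)\le\log(\gamma M)\big]\Big]^+.$$
   Context: A distribution $P$ on a discrete set is an $M$-type if every probability $P(x)$ is an integer multiple of $1/M$. $\imath_X(x):=\log\frac1{P_X(x)}$. $E_\gamma(P\|Q):=\sup_{\mathcal{A}}\{P(\mathcal{A})-\gamma Q(\mathcal{A})\}$. $[a]^+=\max\{a,0\}$. *)

(* Defs.v *)
From Stdlib Require Import Reals List.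
Open Scope R_scope.

Definition fsum {X : Type} (P : X -> R) (l : list X) : R :=
  fold_right (fun x acc => P x + acc) 0 l.

Definition partial_masses {X : Type} (P : X -> R) (A : X -> Prop) (s : R) : Prop :=
  exists l : list X, NoDup l /\ (forall x, In x l -> A x) /\ s = fsum P l.

(* prob P A p : p = P(A) = sum_{x in A} P x (a sum of nonnegative terms,
   i.e. the supremum of its finite partial sums). *)
Definition prob {X : Type} (P : X -> R) (A : X -> Prop) (p : R) : Prop :=
  is_lub (partial_masses P A) p.

Definition is_distribution {X : Type} (P : X -> R) : Prop :=
  (forall x, 0 <= P x) /\ prob P (fun _ => True) 1.

Definition is_M_type {X : Type} (M : nat) (P : X -> R) : Prop :=
  forall x, exists k : nat, P x = INR k / INR M.

Definition Egamma_set {X : Type} (gamma : R) (P Q : X -> R) (v : R) : Prop :=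
  exists (A : X -> Prop) (pa qa : R), prob P A pa /\ prob Q A qa /\ v = pa - gamma * qa.

Definition Egamma {X : Type} (gamma : R) (P Q : X -> R) (e : R) : Prop :=
  is_lub (Egamma_set gamma P Q) e.

(* P_X extended to X + {e}, giving probability zero to the extra symbol e = None *)
Definition extend0 {X : Type} (P : X -> R) (y : option X) : R :=
  match y with Some x => P x | None => 0 end.

(* information density: i_X(x) <= log(gamma M)  (false when P x = 0, i_X = +oo) *)
Definition info_le {X : Type} (P : X -> R) (gamma : R) (M : nat) (x : X) : Prop :=
  0 < P x /\ ln (1 / P x) <= ln (gamma * INR M).

(* Main.v *)
Require Import Defs.
From Stdlib Require Import Reals List Lra Lia ZArith Classical ClassicalEpsilon.
Open Scope R_scope.

Definition deq {T : Type} (x y : T) : {x = y} + {x <> y} :=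
  excluded_middle_informative (x = y).

Fixpoint nsum {X} (g : X -> nat) (l : list X) : nat :=
  match l with nil => 0%nat | a :: t => (g a + nsum g t)%nat end.

Fixpoint alloc {X} (k : X -> nat) (l : list X) (b : nat) (x : X) : nat :=
  match l with
  | nil => 0%nat
  | a :: t => if deq x a then Nat.min (k a) b else alloc k t (b - Nat.min (k a) b) x
  end.

Lemma alloc_le {X} k (l : list X) b x : (alloc k l b x <= k x)%nat.
Proof. revert b; induction l as [|a t IH]; intro b; simpl. lia.
 destruct (deq x a). subst; lia. apply IH. Qed.

Lemma alloc_notin {X} k (l : list X) b x : ~ In x l -> alloc k l b x = 0%nat.
Proof. revert b; induction l as [|a t IH]; intros b H; simpl. auto.
 destruct (deq x a). subst; exfalso; apply H; left; auto. apply IH. intro; apply H; right; auto. Qed.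

Lemma nsum_ext {X} (g h : X -> nat) l : (forall x, In x l -> g x = h x) -> nsum g l = nsum h l.
Proof. induction l as [|a t IH]; intro H; simpl; auto. rewrite H by (left; auto). rewrite IH; auto. intros; apply H; right; auto. Qed.

Lemma alloc_sum {X} k (l : list X) b : NoDup l -> nsum (alloc k l b) l = Nat.min (nsum k l) b.
Proof. revert b; induction l as [|a t IH]; intros b Hnd; simpl. lia.
 inversion Hnd; subst.
 destruct (deq a a) as [_|n]; [|congruence].
 rewrite (nsum_ext _ (alloc k t (b - Nat.min (k a) b)) t).
 rewrite IH by auto. lia.
 intros y Hy. simpl. destruct (deq y a). subst; contradiction. auto. Qed.

Lemma fsum_nonneg {T} (P : T -> R) l : (forall x, 0 <= P x) -> 0 <= fsum P l.
Proof. intro H; induction l; simpl. lra. specialize (H a); lra. Qed.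

Lemma fsum_remove_le {T} (P:T->R) a l : (forall x, 0<=P x) -> fsum P (remove deq a l) <= fsum P l.
Proof. intro H; induction l as [|b t IH]; simpl. lra.
 destruct (deq a b); simpl; specialize (H b); lra. Qed.

Lemma fsum_remove {T} (P:T->R) a l : (forall x, 0<=P x) -> In a l -> P a + fsum P (remove deq a l) <= fsum P l.
Proof. intros H Hin; induction l as [|b t IH]; simpl in *. contradiction.
 pose proof (fsum_remove_le P a t H).
 destruct (deq a b).
 - subst; lra.
 - destruct Hin as [Hb|Hin]. subst; congruence. simpl. specialize (IH Hin); lra. Qed.

Lemma fsum_le_supp {T} (P : T -> R) (l' l : list T) :
  (forall x, 0 <= P x) -> NoDup l' -> (forall x, In x l' -> P x = 0 \/ In x l) -> fsum P l' <= fsum P l.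
Proof. intros Hn; revert l; induction l' as [|a t IH]; intros l Hnd H; simpl.
 - apply fsum_nonneg; auto.
 - inversion Hnd; subst. destruct (H a (or_introl eq_refl)) as [Ha0|Hin].
   + rewrite Ha0. assert (fsum P t <= fsum P l); [|lra]. apply IH; auto.
     intros; apply H; right; auto.
   + apply Rle_trans with (P a + fsum P (remove deq a l)); [|apply fsum_remove; auto].
     apply Rplus_le_compat_l. apply IH; auto. intros x Hx.
     destruct (H x (or_intror Hx)) as [|Hxl]; auto. right. apply in_in_remove; auto.
     intro; subst; contradiction. Qed.

Lemma fsum_lin {T} (f g : T -> R) c l : fsum (fun x => f x - c * g x) l = fsum f l - c * fsum g l.
Proof. induction l; simpl. ring. rewrite IHl; ring. Qed.

Lemma fsum_map {T U} (P : U -> R) (f : T -> U) l : fsum P (map f l) = fsum (fun x => P (f x)) l.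
Proof. induction l; simpl; auto. rewrite IHl; auto. Qed.

Lemma fsum_INR_div {T} (g : T -> nat) c l : fsum (fun x => INR (g x) / c) l = INR (nsum g l) / c.
Proof. induction l; simpl. unfold Rdiv; ring. rewrite IHl, plus_INR; unfold Rdiv; ring. Qed.

Lemma nsum_INR {T} (g : T -> nat) l : INR (nsum g l) = fsum (fun x => INR (g x)) l.
Proof. induction l; simpl; auto. rewrite plus_INR, IHl; auto. Qed.

Lemma fsum_mono {T} (f g : T -> R) l : (forall x, In x l -> f x <= g x) -> fsum f l <= fsum g l.
Proof. induction l; simpl; intros H. lra. assert (f a <= g a) by auto.
 assert (fsum f l <= fsum g l) by auto. lra. Qed.

Lemma fsum_scal {T} (f : T -> R) c l : fsum (fun x => c * f x) l = c * fsum f l.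
Proof. induction l; simpl. ring. rewrite IHl; ring. Qed.

Lemma fsum_len {T} (P : T -> R) c l : (forall x, In x l -> c <= P x) -> INR (length l) * c <= fsum P l.
Proof. induction l; intros H. simpl; lra. change (INR (S (length l)) * c <= P a + fsum P l). rewrite S_INR.
 assert (c <= P a) by (apply H; left; auto).
 assert (INR (length l) * c <= fsum P l) by (apply IHl; intros; apply H; right; auto). lra. Qed.

Lemma fsum_nonpos {T} (D : T -> R) l : (forall y, In y l -> D y <= 0) -> fsum D l <= 0.
Proof. induction l; simpl; intros H. lra. assert (D a <= 0) by auto.
 assert (fsum D l <= 0) by auto. lra. Qed.

Lemma fsum_opt {X} (D : option X -> R) r L : 0 <= r -> D None <= r -> (forall x, D (Some x) <= 0) -> NoDup L -> fsum D L <= r.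
Proof. intros Hr HN HS; induction L as [|a t IH]; simpl; intros Hnd. lra.
 inversion Hnd; subst. destruct a as [x|].
 - specialize (HS x); specialize (IH H2); lra.
 - assert (fsum D t <= 0); [|lra]. apply fsum_nonpos. intros [y|] Hy; auto. contradiction. Qed.

Lemma max_exists (N : nat) : forall (Q : nat -> Prop), Q 0%nat -> (forall n, Q n -> (n <= N)%nat) -> exists n, Q n /\ forall m, Q m -> (m <= n)%nat.
Proof. induction N; intros Q H0 Hb.
 - exists 0%nat; split; [auto|]. intros m Hm; specialize (Hb m Hm); lia.
 - destruct (classic (Q (S N))) as [HS|HS]. exists (S N); split; [auto|]. exact Hb.
   apply IHN; auto. intros n Hn. destruct (Nat.eq_dec n (S N)). subst; contradiction. specialize (Hb n Hn); lia.
Qed.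

Lemma NoDup_map_Some {X} (l : list X) : NoDup l -> NoDup (map Some l).
Proof. induction l; simpl; intros H; constructor; inversion H; subst; auto.
 intro Hin; apply in_map_iff in Hin; destruct Hin as (y & Hy & Hy'); injection Hy; intros; subst; contradiction. Qed.

Lemma prob_empty {T} (P : T -> R) : prob P (fun _ => False) 0.
Proof. split.
 - intros s (l & _ & Hl & ->). destruct l as [|t l]; simpl. lra. exfalso; apply (Hl t); left; auto.
 - intros b Hb. apply Hb. exists nil; repeat split; auto. constructor. Qed.

Definition phat {X} (k : X -> nat) (l : list X) (M : nat) (y : option X) : R :=
  match y with
  | Some x => INR (alloc k l M x) / INR M
  | None => INR (M - Nat.min (nsum k l) M) / INR M
  end.

Theorem mainTheorem5 (X : Type) (PX : X -> R) (M : nat) (gamma : R)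
  (hPX : is_distribution PX) (hM : (0 < M)%nat) (hgamma : 1 <= gamma)
  (pe : R) (hpe : prob PX (info_le PX gamma M) pe) :
  exists Phat : option X -> R,
    is_distribution Phat /\ is_M_type M Phat /\
    exists e : R, Egamma gamma Phat (extend0 PX) e /\
      e <= Rmax 0 (1 - gamma / 2 * pe).
Proof.
  destruct hPX as [Hnn Hlub1].
  set (A0 := info_le PX gamma M).
  assert (HMpos : 0 < INR M) by (apply lt_0_INR; lia).
  assert (Hg : 0 < gamma) by lra.
  assert (HgM : 0 < gamma * INR M) by (apply Rmult_lt_0_compat; lra).
  assert (HA0 : forall x, A0 x -> 1 <= gamma * INR M * PX x).
  { intros x [Hp Hln].
    assert (H : 1 / PX x <= gamma * INR M).
    { destruct (Rle_or_lt (1 / PX x) (gamma * INR M)) as [h|h]; auto.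
      exfalso. assert (ln (gamma * INR M) < ln (1 / PX x)) by (apply ln_increasing; lra). lra. }
    apply (Rmult_le_compat_r (PX x)) in H; [|lra].
    replace (1 / PX x * PX x) with 1 in H by (field; lra). lra. }
  assert (Hle1 : forall l, NoDup l -> fsum PX l <= 1).
  { intros l Hl. apply (proj1 Hlub1). exists l; repeat split; auto. }
  set (N := Z.to_nat (up (gamma * INR M))).
  assert (HlenN : forall l, NoDup l -> (forall x, In x l -> A0 x) -> (length l <= N)%nat).
  { intros l Hnd HA.
    assert (H : INR (length l) * (1 / (gamma * INR M)) <= fsum PX l).
    { apply fsum_len. intros x Hx. specialize (HA0 x (HA x Hx)).
      apply (Rmult_le_reg_l (gamma * INR M)); auto.
      replace (gamma * INR M * (1 / (gamma * INR M))) with 1 by (field; lra). lra. }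
    assert (H2 : INR (length l) <= gamma * INR M).
    { apply (Rmult_le_reg_r (1 / (gamma * INR M))).
      unfold Rdiv; rewrite Rmult_1_l; apply Rinv_0_lt_compat; auto.
      replace (gamma * INR M * (1 / (gamma * INR M))) with 1 by (field; lra).
      specialize (Hle1 l Hnd); lra. }
    destruct (archimed (gamma * INR M)) as [a1 a2].
    assert (hz : (0 < up (gamma * INR M))%Z) by (apply lt_IZR; simpl; lra).
    assert (INR (length l) < INR N).
    { unfold N. rewrite (INR_IZR_INZ (Z.to_nat _)), Z2Nat.id by lia. lra. }
    apply INR_lt in H0. lia. }
  assert (Hmax : exists n, (exists l, NoDup l /\ (forall x, In x l -> A0 x) /\ length l = n) /\ forall m, (exists l, NoDup l /\ (forall x, In x l -> A0 x) /\ length l = m) -> (m <= n)%nat).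
  { apply max_exists with N. exists nil. split; [constructor|split; [intros z []|reflexivity]].
    intros n (l & H1 & H2 & H3). subst; auto. }
  destruct Hmax as [n [(l & Hnd & HlA & Hlen) Hmx]].
  assert (Hall : forall x, A0 x -> In x l).
  { intros x Hx. apply NNPP; intro Hn.
    assert (S n <= n)%nat; [|lia]. apply Hmx. exists (x :: l). split; [constructor; auto|split].
    intros y [<-|Hy]; auto. simpl; lia. }
  assert (Hpe : pe <= fsum PX l).
  { apply (proj2 hpe). intros s (l' & Hnd' & HA' & ->). apply fsum_le_supp; auto.
    intros x Hx; right; apply Hall, HA', Hx. }
  set (k := fun x => Z.to_nat (Int_part (gamma * INR M * PX x))).
  assert (Hk : forall x, INR (k x) <= gamma * INR M * PX x /\ gamma * INR M * PX x - 1 < INR (k x)).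
  { intros x. unfold k. set (t := gamma * INR M * PX x).
    assert (Ht : 0 <= t) by (unfold t; apply Rmult_le_pos; [lra| apply Hnn]).
    destruct (base_Int_part t) as [h1 h2].
    assert (h3 : (-1 < Int_part t)%Z) by (apply lt_IZR; lra).
    rewrite INR_IZR_INZ, Z2Nat.id by lia. split; lra. }
  assert (HkA : forall x, A0 x -> gamma * INR M * PX x <= 2 * INR (k x)).
  { intros x Hx. destruct (Hk x) as [h1 h2]. specialize (HA0 x Hx).
    assert (1 <= INR (k x)).
    { destruct (Nat.eq_dec (k x) 0) as [E|E]. rewrite E in h2; simpl in h2; lra.
      change 1 with (INR 1). apply le_INR; lia. }
    lra. }
  set (Phat := phat k l M).
  set (S0 := None :: map Some l).
  assert (HS0 : NoDup S0).
  { constructor. intro H; apply in_map_iff in H; destruct H as (? & ? & _); discriminate.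
    apply NoDup_map_Some; auto. }
  assert (Hpos : forall y, 0 <= Phat y).
  { intros [x|]; simpl; unfold Rdiv; apply Rmult_le_pos;
     [apply pos_INR | left; apply Rinv_0_lt_compat; auto | apply pos_INR | left; apply Rinv_0_lt_compat; auto]. }
  assert (Hsupp : forall y, Phat y <> 0 -> In y S0).
  { intros [x|] H; [|left; auto]. right. apply in_map. apply NNPP; intro Hn. apply H.
    simpl. rewrite alloc_notin by auto. simpl. unfold Rdiv; ring. }
  assert (HS1 : fsum Phat S0 = 1).
  { simpl. assert (E : fsum Phat (map Some l) = INR (nsum (alloc k l M) l) / INR M).
    { rewrite fsum_map. apply fsum_INR_div. }
    rewrite E, alloc_sum by auto.
    unfold Phat, phat.
    assert (INR (M - Nat.min (nsum k l) M) + INR (Nat.min (nsum k l) M) = INR M).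
    { rewrite <- plus_INR, Nat.sub_add by lia. auto. }
    field_simplify; [|lra]. rewrite H. field. lra. }
  exists Phat. split; [split|split].
  - exact Hpos.
  - split.
    + intros s (L & HL & _ & ->). rewrite <- HS1. apply fsum_le_supp; auto.
      intros y _. destruct (Req_dec (Phat y) 0); [left|right; apply Hsupp]; auto.
    + intros b Hb. rewrite <- HS1; apply Hb. exists S0; repeat split; auto.
  - intros [x|]; eexists; simpl; reflexivity.
  - set (B := Rmax 0 (1 - gamma / 2 * pe)).
    set (r := INR (M - Nat.min (nsum k l) M) / INR M).
    assert (HrB : r <= B).
    { unfold r, B. destruct (Nat.le_gt_cases M (nsum k l)) as [h|h].
      - rewrite Nat.min_r, Nat.sub_diag by lia. simpl. unfold Rdiv; rewrite Rmult_0_l; apply Rmax_l.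
      - rewrite Nat.min_l, minus_INR by lia.
        assert (HK : gamma * INR M / 2 * pe <= INR (nsum k l)).
        { rewrite nsum_INR.
          apply Rle_trans with (fsum (fun x => (gamma * INR M / 2) * PX x) l).
          + rewrite fsum_scal. apply Rmult_le_compat_l; auto. lra.
          + apply fsum_mono. intros x Hx. specialize (HkA x (HlA x Hx)). lra. }
        apply Rle_trans with (1 - gamma/2*pe); [|apply Rmax_r].
        apply (Rmult_le_reg_r (INR M)); auto.
        replace ((INR M - INR (nsum k l)) / INR M * INR M) with (INR M - INR (nsum k l)) by (field; lra).
        lra. }
    assert (Hub : is_upper_bound (Egamma_set gamma Phat (extend0 PX)) r).
    { intros v (A & pa & qa & Hpa & Hqa & ->).
      set (LA := filter (fun y => if excluded_middle_informative (A y) then true else false) S0).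
      assert (HLAnd : NoDup LA) by (apply NoDup_filter; auto).
      assert (HLAA : forall y, In y LA -> A y).
      { intros y Hy. apply filter_In in Hy. destruct Hy as [_ Hy].
        destruct (excluded_middle_informative (A y)); auto; discriminate. }
      assert (Hpa' : pa <= fsum Phat LA).
      { apply (proj2 Hpa). intros s (L & HL & HLA & ->). apply fsum_le_supp; auto.
        intros y Hy. destruct (Req_dec (Phat y) 0); [left; auto|right].
        apply filter_In; split; [apply Hsupp; auto|].
        destruct (excluded_middle_informative (A y)); auto. }
      assert (Hqa' : fsum (extend0 PX) LA <= qa).
      { apply (proj1 Hqa). exists LA; repeat split; auto. }
      assert (gamma * fsum (extend0 PX) LA <= gamma * qa) by (apply Rmult_le_compat_l; lra).
      assert (fsum (fun y => Phat y - gamma * extend0 PX y) LA <= r).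
      { apply fsum_opt; auto.
        - unfold r; unfold Rdiv; apply Rmult_le_pos; [apply pos_INR | left; apply Rinv_0_lt_compat; auto].
        - simpl. unfold r. lra.
        - intros x. simpl.
          assert (INR (alloc k l M x) / INR M <= gamma * PX x); [|lra].
          apply (Rmult_le_reg_r (INR M)); auto.
          replace (INR (alloc k l M x) / INR M * INR M) with (INR (alloc k l M x)) by (field; lra).
          pose proof (le_INR _ _ (alloc_le k l M x)). destruct (Hk x). lra. }
      rewrite fsum_lin in H0. lra. }
    destruct (completeness (Egamma_set gamma Phat (extend0 PX))) as [e He].
    + exists r; exact Hub.
    + exists 0. exists (fun _ => False), 0, 0. split; [apply prob_empty|split; [apply prob_empty|ring]].
    + exists e; split; auto. apply Rle_trans with r; auto. apply (proj2 He); auto.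
Qed.
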